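(* Let $1\le h,t\le n$, $\mathbf j=(j_k)\in\mathbb N^n_\vartriangle$ and $A=(a_{i,j})\in\Theta^\pm_\vartriangle(n)$. The following hold in $\mathcal S_\vartriangle(n,r)_{\mathbb Q}$ for every $r\ge0$: (1) $0[\mathbf e_t,r]\,A[\mathbf j,r]=A[\mathbf j+\mathbf e_t,r]+\big(\sum_{s\in\mathbb Z}a_{t,s}\big)A[\mathbf j,r]$; (2) for $\varepsilon\in\{1,-1\}$, $$E^\vartriangle_{h,h+\varepsilon}[\mathbf 0,r]\,A[\mathbf j,r]=\sum_{i\ne h,h+\varepsilon;\ a_{h+\varepsilon,i}\ge1}(a_{h,i}+1)(A+E^\vartriangle_{h,i}-E^\vartriangle_{h+\varepsilon,i})[\mathbf j,r]+\sum_{0\le i\le j_h}(-1)^i\binom{j_h}{i}(A-E^\vartriangle_{h+\varepsilon,h})[\mathbf j+(1-i)\mathbf e_h,r]+(a_{h,h+\varepsilon}+1)\sum_{0\le i\le j_{h+\varepsilon}}\binom{j_{h+\varepsilon}}{i}(A+E^\vartriangle_{h,h+\varepsilon})[\mathbf j-i\mathbf e_{h+\varepsilon},r];$$ (3) for $m\in\mathbb Z\setminus\{0\}$, $$E^\vartriangle_{h,h+mn}[\mathbf 0,r]\,A[\mathbf j,r]=\sum_{s\notin\{h,h-mn\};\ a_{h,s}\ge1}(a_{h,s+mn}+1)(A+E^\vartriangle_{h,s+mn}-E^\vartriangle_{h,s})[\mathbf j,r]+\sum_{0\le t\le j_h}(a_{h,h+mn}+1)\binom{j_h}{t}(A+E^\vartriangle_{h,h+mn})[\mathbf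 j-t\mathbf e_h,r]+\sum_{0\le t\le j_h}(-1)^t\binom{j_h}{t}(A-E^\vartriangle_{h,h-mn})[\mathbf j+(1-t)\mathbf e_h,r].$$
   Context: Fix $n\ge2$. $I_\vartriangle(n,r)$ is the set of integer sequences $\mathbf i=(i_k)_{k\in\mathbb Z}$ with $i_{k+r}=i_k+n$, identified with $\mathbb Z^r$ via $(i_1,\dots,i_r)$. $\Omega_{\mathbb Q}^{\otimes r}$ is the $\mathbb Q$-space with basis $\omega_{\mathbf i}$ ($\mathbf i\in I_\vartriangle(n,r)$). The affine symmetric group $\mathfrak S_{\vartriangle,r}$ (bijections $w:\mathbb Z\to\mathbb Z$ with $w(k+r)=w(k)+r$) acts on the right by $\omega_{\mathbf i}w=\omega_{\mathbf iw}$, $(\mathbf iw)_k=i_{w(k)}$, and $\mathcal S_\vartriangle(n,r)_{\mathbb Q}=\mathrm{End}_{\mathbb Q\mathfrak S_{\vartriangle,r}}(\Omega_{\mathbb Q}^{\otimes r})$ with composition as product. $\Theta_\vartriangle(n)$ is the set of matrices $A=(a_{k,l})_{k,l\in\mathbb Z}$ over $\mathbb N$ with $a_{k+n,l+n}=a_{k,l}$ and finitely many nonzero entries in each row; $\sigma(A)=\sum_{1\le k\le n,\,l\in\mathbb Z}a_{k,l}$; $\Theta_\vartriangle(n,r)=\{A\in\Theta_\vartriangle(n)\mid\sigma(A)=r\}$; $\Theta^\pm_\vartriangle(n)$ is the set of $A\in\Theta_\vartriangle(n)$ with zero diagonal. For $\mathbf i,\mathbf j\in I_\vartriangle(n,r)$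 let $M(\mathbf i,\mathbf j)=(a_{k,l})$, $a_{k,l}=|\{s\in\mathbb Z\mid i_s=k,\ j_s=l\}|$; for $A\in\Theta_\vartriangle(n,r)$, $[A]_1\in\mathcal S_\vartriangle(n,r)_{\mathbb Q}$ is the map $\omega_{\mathbf j}\mapsto\sum_{\mathbf i:\,M(\mathbf i,\mathbf j)=A}\omega_{\mathbf i}$; these form a basis. $\mathbb N^n_\vartriangle$ is the set of $n$-periodic sequences of nonnegative integers (indices read mod $n$), $\mathbf e_h$ the periodic unit vector, $\Lambda_\vartriangle(n,m)=\{\lambda\in\mathbb N^n_\vartriangle\mid\sum_{i=1}^n\lambda_i=m\}$, $\mathrm{diag}(\lambda)$ the diagonal matrix with entries $\lambda_i$, and $\lambda^{\mathbf j}=\prod_{i=1}^n\lambda_i^{j_i}$ with $0^0=1$. $E^\vartriangle_{i,j}$ is the matrix with $1$ at positions $(i+sn,j+sn)$, $s\in\mathbb Z$, and $0$ elsewhere. For $A\in\Theta^\pm_\vartriangle(n)$, $A[\mathbf j,r]=\sum_{\lambda\in\Lambda_\vartriangle(n,r-\sigma(A))}\lambda^{\mathbf j}[A+\mathrm{diag}(\lambda)]_1$ if $\sigma(A)\le r$ and $0$ otherwise; moreover $A[\mathbf j,r]:=0$ if some off-diagonal entry of $A$ is negative. $0$ denotes the zero matrix. *)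

(* Defs.v *)
From HB Require Import structures.
From mathcomp Require Import all_boot all_order all_algebra.
From mathcomp Require Import boolp classical_sets cardinality fsbigop.

Set Implicit Arguments.
Unset Strict Implicit.
Unset Printing Implicit Defensive.
Import Order.TTheory GRing.Theory Num.Theory.
Local Open Scope ring_scope.

(* A matrix (a_{k,l})_{k,l in Z}; we allow integer entries so that A+E-E  *)
(* (possibly negative) can be formed, as in the paper.                     *)
Definition mat := int -> int -> int.
Definition nvec := int -> nat.

Definition periodic_vec (n : nat) (v : nvec) : Prop :=
  forall k : int, v (k + n%:Z) = v k.

Definition periodic_mat (n : nat) (A : mat) : Prop :=
  forall k l : int, A (k + n%:Z) (l + n%:Z) = A k l.

Definition row_finite (A : mat) : Prop :=
  forall k : int, finite_set [set l : int | A k l != 0].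

Definition in_Theta_pm (n : nat) (A : mat) : Prop :=
  [/\ periodic_mat n A, row_finite A,
      (forall k l : int, 0 <= A k l) & (forall k : int, A k k = 0)].

Definition madd (A B : mat) : mat := fun k l => A k l + B k l.
Definition msub (A B : mat) : mat := fun k l => A k l - B k l.
Definition mzero : mat := fun _ _ => 0.

Definition Emat (n : nat) (a b : int) : mat := fun k l =>
  if ((n%:Z %| k - a)%Z && (k - a == l - b)) then 1 else 0.

Definition dmat (lam : nvec) : mat := fun k l =>
  if k == l then (lam k)%:Z else 0.

Definition evec (n : nat) (h : int) : nvec := fun k =>
  if (n%:Z %| k - h)%Z then 1%N else 0%N.

Definition vadd (u v : nvec) : nvec := fun k => (u k + v k)%N.
(* truncated subtraction: only used where the result is exact *)
Definition vsub (u v : nvec) : nvec := fun k => (u k - v k)%N.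
Definition vscale (c : nat) (v : nvec) : nvec := fun k => (c * v k)%N.
Definition vzero : nvec := fun _ => 0%N.

Definition sigma (n : nat) (A : mat) : int :=
  \sum_(1 <= k < n.+1) \sum_(l \in [set: int]) A k%:Z l.

(* lambda^j = prod_{i=1}^n lambda_i^{j_i}  (0^0 = 1) *)
Definition vpow (n : nat) (lam j : nvec) : nat :=
  (\prod_(1 <= i < n.+1) (lam i%:Z) ^ (j i%:Z))%N.

(* An element lambda of Lambda_Delta(n,m) is encoded by its values on the
   residues 0..n-1 mod n (residue 0 standing for index n). *)
Definition lam_of (n m : nat) (f : {ffun 'I_n -> 'I_m.+1}) : nvec := fun k =>
  (\sum_(i < n | (n%:Z %| (k - (i : nat)%:Z)%R)%Z) (f i : nat))%N.

Definition in_Lambda (n m : nat) (f : {ffun 'I_n -> 'I_m.+1}) : bool :=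
  (\sum_(i < n) (f i : nat))%N == m.

(* I_Delta(n,r) identified with Z^r via (i_1,...,i_r); the element         *)
(* s : 'I_r stands for the index s+1.                                      *)
Definition idx (r : nat) := {ffun 'I_r -> int}.

(* M(i,j) = (a_{k,l}), a_{k,l} = |{s in Z | i_s = k, j_s = l}|, where
   i_{s+pr} = i_s + pn.  For s' = s + p r (1<=s<=r) the pair (i_{s'},j_{s'})
   equals (k,l) iff k - i_s = l - j_s = p n; so the count is over 1<=s<=r. *)
Definition Mmat (n r : nat) (i j : idx r) : mat := fun k l =>
  (\sum_(s < r) (((n%:Z %| (k - i s)%R)%Z && ((k - i s)%R == (l - j s)%R)) : nat))%N%:Z.

(* An endomorphism of Omega^{(x)r}_Q (column-finite) is given by its matrix
   of coefficients: F i j = coefficient of omega_i in F(omega_j). *)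
Definition op (r : nat) := idx r -> idx r -> rat.

Definition opadd r (F G : op r) : op r := fun i j => F i j + G i j.
Definition opscale r (c : rat) (F : op r) : op r := fun i j => c * F i j.
Definition opzero r : op r := fun _ _ => 0.
Definition opmul r (F G : op r) : op r := fun i j =>
  \sum_(k \in [set: idx r]) F i k * G k j.
Definition opsumZ r (P : set int) (F : int -> op r) : op r := fun i j =>
  \sum_(s \in P) F s i j.
Definition opsumN r (N : nat) (F : nat -> op r) : op r := fun i j =>
  \sum_(0 <= t < N.+1) F t i j.

Definition basis1 (n r : nat) (A : mat) : op r := fun i j =>
  if `[< Mmat n i j = A >] then 1 else 0.

Definition Aop (n r : nat) (A : mat) (j : nvec) : op r :=
  if `[< exists k l, A k l < 0 >] then @opzero r
  else if sigma n A <= r%:Z then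
    let m := `|r%:Z - sigma n A|%N in
    fun x y => \sum_(f : {ffun 'I_n -> 'I_m.+1} | in_Lambda f)
                 (vpow n (lam_of f) j)%:R * @basis1 n r (madd A (dmat (lam_of f))) x y
  else @opzero r.

Arguments Aop n r A j : clear implicits.
Arguments basis1 n r A : clear implicits.

(* Main.v *)
Require Import Defs.
From HB Require Import structures.
From mathcomp Require Import all_boot all_order all_algebra.
From mathcomp Require Import boolp classical_sets cardinality fsbigop.
From mathcomp Require Import zify ring lra.
Import Order.TTheory GRing.Theory Num.Theory.
Local Open Scope ring_scope.
Set Implicit Arguments.
Unset Strict Implicit.


Definition rep (n : nat) (a : int) : nat := (absz ((a - 1) %% n)%Z).+1.

Lemma rep_spec n a : (0 < n)%N ->
  [/\ (1 <= rep n a <= n)%N, (n%:Z %| (rep n a)%:Z - a)%Z &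
      forall k : nat, (1 <= k <= n)%N -> (n%:Z %| k%:Z - a)%Z -> k = rep n a].
Proof.
move=> n0; rewrite /rep.
have nz : n%:Z != 0 by rewrite eqz_nat -lt0n.
have ge := modz_ge0 (a - 1) nz.
have lt : ((a - 1) %% n < n)%Z by apply: ltz_pmod; rewrite ltz_nat.
have E := divz_eq (a - 1) n.
set q := ((a-1) %/ n)%Z in E; set m := ((a-1) %% n)%Z in ge lt E *.
have hm : (`|m|%N)%:Z = m by rewrite gez0_abs.
split.
- apply/andP; split => //; rewrite -[(_ <= n)%N]/(`|m| < n)%N -ltz_nat hm //.
- apply/dvdzP; exists (- q); rewrite -addn1 PoszD hm.
  lia.
- move=> k /andP[k1 kn] /dvdzP[p hp].
  apply/eqP; rewrite -eqz_nat -addn1 PoszD hm.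
  have ht: (p + q) * n = (k%:Z - 1) - m by rewrite mulrDl -hp; lia.
  move: k1 kn; rewrite -!lez_nat => k1 kn.
  have n0' : 0 < n%:Z by rewrite ltz_nat.
  have : p + q = 0.
    case: (ltrgtP (p + q) 0) => // hpq.
      have : (p + q) * n <= - n%:Z by rewrite -mulN1r ler_pM2r //; lia.
      lia.
    have : n%:Z <= (p + q) * n by rewrite -{1}(mul1r n%:Z) ler_pM2r //; lia.
    lia.
  move=> e; rewrite e mul0r in ht; apply/eqP; lia.
Qed.

Lemma dvdzB_sym (n : nat) (a b : int) : (n%:Z %| a - b)%Z = (n%:Z %| b - a)%Z.
Proof. by rewrite -opprB rpredN. Qed.

Lemma per_vec n (j : nvec) : periodic_vec n j -> forall k (p : int), j (k + p * n%:Z) = j k.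
Proof.
move=> Hj k p.
have neg : forall k, j (k - n%:Z) = j k by move=> k'; rewrite -(Hj (k' - n%:Z)) subrK.
case: p => m.
  elim: m k => [|m IH] k; first by rewrite mul0r addr0.
  by rewrite -[m.+1]addn1 PoszD mulrDl mul1r addrA Hj IH.
elim: m k => [|m IH] k; first by rewrite NegzE mulN1r neg.
rewrite NegzE -[m.+2]addn1 PoszD opprD mulrDl mulN1r addrA neg.
by rewrite -NegzE IH.
Qed.

Lemma per_mat n (A : mat) : periodic_mat n A ->
  forall k l (p : int), A (k + p * n%:Z) (l + p * n%:Z) = A k l.
Proof.
move=> HA k l p.
have neg : forall k l, A (k - n%:Z) (l - n%:Z) = A k l.
  by move=> k' l'; rewrite -(HA (k' - n%:Z)) !subrK.
case: p => m.
  elim: m k l => [|m IH] k l; first by rewrite mul0r !addr0.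
  by rewrite -[m.+1]addn1 PoszD mulrDl mul1r !addrA HA IH.
elim: m k l => [|m IH] k l; first by rewrite NegzE mulN1r neg.
rewrite NegzE -[m.+2]addn1 PoszD opprD mulrDl mulN1r !addrA neg.
by rewrite -NegzE IH.
Qed.

Lemma per_vec_dvd n (j : nvec) : periodic_vec n j -> forall a b,
  (n%:Z %| a - b)%Z -> j a = j b.
Proof.
move=> Hj a b /dvdzP[p hp].
by rewrite -(per_vec Hj b p) -hp addrC subrK.
Qed.

Lemma per_mat_dvd n (A : mat) : periodic_mat n A -> forall a b c,
  (n%:Z %| a - b)%Z -> A a (c + (a - b)) = A b c.
Proof.
move=> HA a b c /dvdzP[p hp].
by rewrite hp -(per_mat HA b c p) -hp [b + _]addrC subrK.
Qed.

Lemma sum_res (R : zmodType) n (a : int) (F : nat -> R) : (0 < n)%N ->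
  \sum_(1 <= k < n.+1) (if (n%:Z %| k%:Z - a)%Z then F k else 0) = F (rep n a).
Proof.
move=> n0; have [rb rd ru] := rep_spec a n0.
rewrite (bigD1_seq (rep n a)) ?mem_index_iota ?ltnS ?iota_uniq //= rd.
rewrite big1_seq ?addr0 // => k /andP[kr]; rewrite mem_index_iota ltnS => kb.
by case: ifP => // /(ru _ kb) ke; rewrite ke eqxx in kr.
Qed.

Lemma dvd_ord n (i : nat) k : (i < n)%N ->
  (n%:Z %| k - i%:Z)%Z = (i%:Z == (k %% n)%Z).
Proof.
move=> lt; rewrite -eqz_mod_dvd eq_sym; congr (_ == _).
by rewrite modz_small // ltz_nat lt.
Qed.

Lemma sum_res0 (R : zmodType) n (a : int) (F : 'I_n -> R) (i0 : 'I_n) :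
  (i0 : nat)%:Z = (a %% n)%Z ->
  \sum_(i < n) (if (n%:Z %| a - (i : nat)%:Z)%Z then F i else 0) = F i0.
Proof.
move=> e; rewrite (bigD1 i0) //= dvd_ord // e eqxx big1 ?addr0 // => i ne.
rewrite dvd_ord // -e eqz_nat; case: eqP => // /val_inj ei.
by rewrite ei eqxx in ne.
Qed.

Definition Mn n r (x y : idx r) (k l : int) : nat :=
  (\sum_(s < r) (((n%:Z %| (k - x s)%R)%Z && ((k - x s)%R == (l - y s)%R)) : nat))%N.

Lemma MmatE n r (x y : idx r) k l : Mmat n x y k l = (Mn n x y k l)%:Z.
Proof. by []. Qed.

Lemma Mmat_E n r (x y : idx r) k l :
  Mmat n x y k l = \sum_(s < r) Emat n (x s) (y s) k l.
Proof.
rewrite /Mmat /Emat -natz natr_sum; apply: eq_bigr => s _.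
by case: ifP.
Qed.

Lemma Emat_delta n a b k l : Emat n a b k l =
  if l == k - a + b then (if (n%:Z %| k - a)%Z then 1 else 0) else 0.
Proof.
rewrite /Emat; have -> : (k - a == l - b) = (l == k - a + b).
  by apply/eqP/eqP => e; [rewrite e subrK | rewrite e addrK].
by case: (l == _); rewrite ?andbT ?andbF.
Qed.

Lemma fsum_delta r (p : 'I_r -> int) (w : 'I_r -> int) :
  \sum_(l \in [set: int]) \sum_(s < r) (if l == p s then w s else 0) =
  \sum_(s < r) w s.
Proof.
set r0 := undup [seq p s | s <- enum 'I_r].
rewrite (fsbigE r0) ?undup_uniq //; last first.
  move=> l _ lr; apply: big1 => s _; case: eqP => // e.
  by move: lr; rewrite mem_undup e map_f // mem_enum.
under eq_bigl do rewrite in_setT.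
rewrite exchange_big /=; apply: eq_bigr => s _.
rewrite /r0 (bigD1_seq (p s)); last exact: undup_uniq.
  rewrite eqxx big1 => [|l /negbTE -> //]; exact: addr0.
by rewrite mem_undup map_f // mem_enum.
Qed.

Definition offM (M : mat) : mat := fun k l => if k == l then 0 else M k l.
Definition odeq (M B : mat) : Prop := forall k l, k != l -> M k l = B k l.

Lemma rowsum_M n r (x y : idx r) k :
  \sum_(l \in [set: int]) Mmat n x y k l =
  \sum_(s < r) (if (n%:Z %| k - x s)%Z then 1 else 0).
Proof.
rewrite -(fsum_delta (fun s => k - x s + y s)).
by apply: eq_fsbigr => l _; rewrite Mmat_E; apply: eq_bigr => s _; rewrite Emat_delta.
Qed.

Lemma rowsum_off n r (x y : idx r) k :
  \sum_(l \in [set: int]) offM (Mmat n x y) k l =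
  \sum_(s < r) (if (n%:Z %| k - x s)%Z && (x s != y s) then 1 else 0).
Proof.
rewrite -(fsum_delta (fun s => k - x s + y s)).
apply: eq_fsbigr => l _; rewrite /offM Mmat_E.
case: eqP => [<-|/eqP kl].
  apply/esym/big1 => s _; case: eqP => // e.
  have ->: x s = y s by lia.
  by rewrite eqxx andbF.
apply: eq_bigr => s _; rewrite Emat_delta; case: eqP => // e.
have -> : x s != y s.
  apply/eqP => exy; move: kl; rewrite e exy subrK eqxx //.
by rewrite andbT.
Qed.

Lemma sigma_off n r (x y : idx r) : (0 < n)%N ->
  sigma n (offM (Mmat n x y)) = \sum_(s < r) (if x s != y s then 1 else 0).
Proof.
move=> n0; rewrite /sigma.
under eq_bigr do rewrite rowsum_off.
rewrite exchange_big /=; apply: eq_bigr => s _.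
rewrite -(@sum_res _ n (x s) (fun _ => if x s != y s then 1 else 0) n0).
by apply: eq_bigr => k _; rewrite dvdzB_sym; case: (_ %| _)%Z.
Qed.

Lemma diagsum n r (x y : idx r) : (0 < n)%N ->
  \sum_(1 <= k < n.+1) Mmat n x y k%:Z k%:Z =
  \sum_(s < r) (if x s == y s then 1 else 0).
Proof.
move=> n0; under eq_bigr do rewrite Mmat_E.
rewrite exchange_big /=; apply: eq_bigr => s _.
rewrite -(@sum_res _ n (x s) (fun _ => if x s == y s then 1 else 0) n0).
apply: eq_bigr => k _; rewrite /Emat dvdzB_sym.
have -> : (k%:Z - x s == k%:Z - y s) = (x s == y s).
  by apply/eqP/eqP => [/addrI/oppr_inj|->].
by case: (_ %| _)%Z; case: (_ == _).
Qed.

Lemma sigma_diag n r (x y : idx r) : (0 < n)%N ->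
  sigma n (offM (Mmat n x y)) + \sum_(1 <= k < n.+1) Mmat n x y k%:Z k%:Z = r%:Z.
Proof.
move=> n0; rewrite sigma_off // diagsum // -big_split /=.
rewrite (eq_bigr (fun _ => 1)); last by move=> s _; case: eqP.
by rewrite sumr_const card_ord -natz.
Qed.

Lemma dvd_shift n a b c : (n%:Z %| a - b)%Z -> (n%:Z %| a - c)%Z = (n%:Z %| b - c)%Z.
Proof.
move=> h; have -> : a - c = (a - b) + (b - c) by rewrite addrA subrK.
by rewrite rpredDl.
Qed.

Definition dgv n r (x y : idx r) : nvec := fun k => Mn n x y k k.

Lemma Mn_diag n r (x y : idx r) k :
  Mn n x y k k = (\sum_(s < r) (((n%:Z %| (k - x s)%R)%Z && (x s == y s)) : nat))%N.
Proof.
apply: eq_bigr => s _.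
by have -> : (k - x s == k - y s) = (x s == y s) by apply/eqP/eqP => [/addrI/oppr_inj|->].
Qed.

Lemma dg_cong n r (x y : idx r) k k' : (n%:Z %| k - k')%Z ->
  Mn n x y k k = Mn n x y k' k'.
Proof.
by move=> h; rewrite !Mn_diag; apply: eq_bigr => s _; rewrite (dvd_shift _ h).
Qed.

Lemma mod_lt n k : (0 < n)%N -> (`|(k %% n%:Z)%Z| < n)%N.
Proof.
move=> n0; have nz : n%:Z != 0 by rewrite eqz_nat -lt0n.
by rewrite -ltz_nat gez0_abs ?modz_ge0 //; apply: ltz_pmod; rewrite ltz_nat.
Qed.

Lemma mod_ordE n k (n0 : (0 < n)%N) :
  ((Ordinal (mod_lt k n0) : nat))%:Z = (k %% n%:Z)%Z.
Proof.
have nz : n%:Z != 0 by rewrite eqz_nat -lt0n.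
by rewrite /= gez0_abs ?modz_ge0.
Qed.

Lemma diagsum0 n r (x y : idx r) : (0 < n)%N ->
  \sum_(i < n) Mmat n x y (i : nat)%:Z (i : nat)%:Z =
  \sum_(s < r) (if x s == y s then 1 else 0).
Proof.
move=> n0; under eq_bigr do rewrite Mmat_E.
rewrite exchange_big /=; apply: eq_bigr => s _.
rewrite -(@sum_res0 _ n (x s) (fun _ => if x s == y s then 1 else 0) _ (mod_ordE (x s) n0)).
apply: eq_bigr => k _; rewrite /Emat dvdzB_sym.
have -> : ((k : nat)%:Z - x s == (k : nat)%:Z - y s) = (x s == y s).
  by apply/eqP/eqP => [/addrI/oppr_inj|->].
by case: (_ %| _)%Z; case: (_ == _).
Qed.

Lemma mat_ext (A B : mat) : (forall k l, A k l = B k l) -> A = B.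
Proof. by move=> e; apply/funext => k; apply/funext => l. Qed.

Lemma Aop_char n r (B : mat) (j : nvec) (x y : idx r) : (0 < n)%N ->
  (forall k, B k k = 0) ->
  Aop n r B j x y =
  if `[< odeq (Mmat n x y) B >] then (vpow n (dgv n x y) j)%:R else 0.
Proof.
move=> n0 B0; rewrite /Aop.
have key : odeq (Mmat n x y) B -> B = offM (Mmat n x y).
  move=> od; apply: mat_ext => k l; rewrite /offM; case: eqP => [<-|/eqP kl].
    exact: B0.
  by rewrite od.
case: (pselect (odeq (Mmat n x y) B)) => od; last first.
  rewrite (asboolF od); case: ifP => // _; case: ifP => // _.
  move=> /=; apply: big1 => f _; rewrite /basis1 asboolF ?mulr0 //.
  move=> e; apply: od => k l kl; rewrite e /madd /dmat (negbTE kl) addr0 //.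
rewrite (asboolT od).
have nneg : `[< exists k l, B k l < 0 >] = false.
  apply/asboolF => -[k [l]]; rewrite (key od) /offM; case: eqP => _.
    by rewrite ltxx.
  by rewrite MmatE.
rewrite nneg.
have sd := sigma_diag x y n0; rewrite -(key od) in sd.
have Sn : \sum_(1 <= k < n.+1) Mmat n x y k%:Z k%:Z =
          (\sum_(1 <= k < n.+1) Mn n x y k%:Z k%:Z)%N%:Z.
  by rewrite -natz natr_sum; apply: eq_bigr => k _; rewrite natz.
rewrite Sn in sd.
have sle : sigma n B <= r%:Z.
  by rewrite -sd lerDl.
rewrite sle.
have mE : `|r%:Z - sigma n B|%N = (\sum_(1 <= k < n.+1) Mn n x y k%:Z k%:Z)%N.
  by rewrite -sd addrC addKr.
move=> /=.
set m := `|r%:Z - sigma n B|%N.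
have Mle : forall k, (Mn n x y k k <= m)%N.
  move=> k; have [rb rd ru] := rep_spec k n0.
  rewrite (@dg_cong _ _ _ _ k (rep n k)); last by rewrite dvdzB_sym.
  rewrite /m mE (bigD1_seq (rep n k)) ?mem_index_iota ?ltnS ?iota_uniq //=.
  exact: leq_addr.
pose f0 : {ffun 'I_n -> 'I_m.+1} := [ffun i : 'I_n => inord (Mn n x y (i : nat) (i : nat))].
have f0v : forall i, (f0 i : nat) = Mn n x y (i : nat) (i : nat).
  by move=> i; rewrite /f0 ffunE inordK // ltnS.
have lamf : forall (f : {ffun 'I_n -> 'I_m.+1}) k,
    lam_of f k = f (Ordinal (mod_lt k n0)).
  move=> f k; rewrite /lam_of (big_pred1 (Ordinal (mod_lt k n0))) // => i /=.
  rewrite dvd_ord //; apply/eqP/eqP => [e|->]; last exact: mod_ordE.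
  by apply: val_inj => /=; apply/eqP; rewrite -eqz_nat e mod_ordE.
have lamf0 : lam_of f0 = dgv n x y.
  apply/funext => k; rewrite lamf f0v /dgv; apply: dg_cong.
  by rewrite mod_ordE dvdzB_sym -eqz_mod_dvd modz_mod.
have inf0 : in_Lambda f0.
  rewrite /in_Lambda; apply/eqP.
  have := diagsum0 x y n0; rewrite -(diagsum x y n0) Sn.
  have -> : \sum_(i < n) Mmat n x y (i : nat)%:Z (i : nat)%:Z =
            (\sum_(i < n) Mn n x y (i : nat)%:Z (i : nat)%:Z)%N%:Z.
    by rewrite -natz natr_sum; apply: eq_bigr => k _; rewrite natz.
  move=> /eqP; rewrite eqz_nat => /eqP e.
  rewrite -(eq_bigr _ (fun i _ => f0v i)) in e.
  by rewrite e /m mE.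
have uniqf : forall f, Mmat n x y = madd B (dmat (lam_of f)) -> f = f0.
  move=> f e; apply/ffunP => i; apply: val_inj; rewrite /= f0v.
  have := congr1 (fun M => M (i : nat)%:Z (i : nat)%:Z) e.
  rewrite /madd /dmat eqxx B0 add0r MmatE => /eqP; rewrite eqz_nat => /eqP ->.
  rewrite lamf; congr (nat_of_ord (f _)); apply: val_inj => /=.
  by rewrite modz_small ?ltz_nat ?ltn_ord.
rewrite (bigD1 f0) //= big1 ?addr0.
  rewrite /basis1 lamf0 asboolT ?mulr1 //.
  apply: mat_ext => k l; rewrite /madd /dmat; case: eqP => [<-|/eqP kl].
    by rewrite B0 add0r MmatE.
  by rewrite addr0 od.
move=> f /andP[_ nf]; rewrite /basis1; case: asboolP => [e|]; last by rewrite mulr0.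
by rewrite (uniqf f e) eqxx in nf.
Qed.


Definition Pw n (M : mat) (j : nvec) : rat :=
  \prod_(1 <= i < n.+1) ((M i%:Z i%:Z)%:~R) ^+ (j i%:Z).
Definition Q n (M B : mat) (j : nvec) : rat :=
  if `[< odeq M B >] then Pw n M j else 0.

Lemma Aop_Q n r (B : mat) (j : nvec) (x y : idx r) : (0 < n)%N ->
  (forall k, B k k = 0) -> Aop n r B j x y = Q n (Mmat n x y) B j.
Proof.
move=> n0 B0; rewrite Aop_char // /Q; case: asboolP => // _.
rewrite /vpow natr_prod; apply: eq_bigr => i _; by rewrite natrX.
Qed.

Lemma Pw_split n q (M M' : mat) (j j' : nvec) : (1 <= q <= n)%N ->
  (forall i : nat, (1 <= i <= n)%N -> i != q ->
     M' i%:Z i%:Z = M i%:Z i%:Z /\ j' i%:Z = j i%:Z) ->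
  Pw n M' j' = ((M' q%:Z q%:Z)%:~R ^+ (j' q%:Z)) *
     \prod_(1 <= i < n.+1 | i != q) (M i%:Z i%:Z)%:~R ^+ (j i%:Z).
Proof.
move=> qb e; rewrite /Pw (bigD1_seq q); last exact: iota_uniq.
  2: by rewrite mem_index_iota ltnS.
rewrite [X in _ = _ * X]big_seq_cond [X in _ _ X = _]big_seq_cond.
rewrite (eq_bigr (fun i : nat => (M i%:Z i%:Z)%:~R ^+ (j i%:Z))) //.
move=> i /andP[]; rewrite mem_index_iota ltnS => ib iq.
by have [-> ->] := e i ib iq.
Qed.

Lemma Emat_shift n a b a' b' : (n%:Z %| a - a')%Z -> a - a' = b - b' ->
  Emat n a b = Emat n a' b'.
Proof.
move=> hd he; apply: mat_ext => k l; rewrite /Emat.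
have -> : (n%:Z %| k - a')%Z = (n%:Z %| k - a)%Z.
  have -> : k - a' = (k - a) + (a - a') by rewrite addrA subrK.
  by rewrite rpredDr.
have -> : (k - a' == l - b') = (k - a == l - b).
  clear hd; apply/eqP/eqP => e; lia.
by [].
Qed.

Lemma Emat_ge0 n a b k l : 0 <= Emat n a b k l.
Proof. by rewrite /Emat; case: ifP. Qed.

Lemma Emat_diag n a b k : a != b -> Emat n a b k k = 0.
Proof.
move=> ab; rewrite /Emat; case: ifP => // /andP[_ /eqP e].
have eab : a = b by lia.
by rewrite eab eqxx in ab.
Qed.

Lemma Emat_offdiag n a k l : k != l -> Emat n a a k l = 0.
Proof.
move=> kl; rewrite /Emat; case: ifP => // /andP[_ /eqP e].
have ekl : k = l by lia.
by rewrite ekl eqxx in kl.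
Qed.

Lemma Emat_at n a b : Emat n a b a b = 1.
Proof. by rewrite /Emat !subrr dvdz0 eqxx. Qed.

Lemma Emat_at2 n a b c : (n%:Z %| c - a)%Z -> Emat n a b c (c - a + b) = 1.
Proof.
move=> h; rewrite /Emat h /=; have -> : c - a + b - b = c - a by rewrite addrK.
by rewrite eqxx.
Qed.


Definition upd r (x : idx r) (s : 'I_r) (d : int) : idx r :=
  [ffun s' => if s' == s then x s + d else x s'].

Lemma M_ge1 n r (x k : idx r) s : 1 <= Mmat n x k (x s) (k s).
Proof.
rewrite Mmat_E (bigD1 s) //= Emat_at -[X in X <= _]addr0 lerD2l.
by apply: sumr_ge0 => i _; apply: Emat_ge0.
Qed.

Lemma odeq_zero n r (x k : idx r) : odeq (Mmat n x k) mzero -> k = x.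
Proof.
move=> od; apply/ffunP => s; apply/eqP; rewrite eq_sym; apply/negPn/negP => ne.
have := od (x s) (k s) ne; have := M_ge1 n x k s; rewrite /mzero => h1 h2.
by rewrite h2 in h1.
Qed.

Lemma odeq_self n r (x : idx r) : odeq (Mmat n x x) mzero.
Proof.
move=> k l kl; rewrite Mmat_E /mzero; apply: big1 => s _; exact: Emat_offdiag.
Qed.

Lemma upd_inj r (x : idx r) (d : int) : d != 0 -> injective (upd x ^~ d).
Proof.
move=> d0 s s' e; apply/eqP; apply/negPn/negP => ne.
have := congr1 (fun f : idx r => f s) e; rewrite /upd !ffunE eqxx (negbTE ne).
move=> e2; move/eqP: d0; apply; lia.
Qed.

Lemma supp_E' n r (x : idx r) s (h d : int) : (n%:Z %| x s - h)%Z ->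
  odeq (Mmat n x (upd x s d)) (Emat n h (h + d)).
Proof.
move=> hs k l kl; rewrite Mmat_E (bigD1 s) //= big1 ?addr0.
  rewrite /upd ffunE eqxx (@Emat_shift n (x s) (x s + d) h (h + d)) //.
  clear; lia.
move=> s' ns; rewrite /upd ffunE (negbTE ns); exact: Emat_offdiag.
Qed.

Lemma supp_E n r (x k : idx r) (h d : int) : d != 0 ->
  odeq (Mmat n x k) (Emat n h (h + d)) -> exists2 s, (n%:Z %| x s - h)%Z & k = upd x s d.
Proof.
move=> d0 od.
pose P := fun s => (n%:Z %| (h - x s)%R)%Z && ((h - x s)%R == (h + d - k s)%R).
have hne : h != h + d by rewrite -subr_eq0 opprD addrA subrr sub0r oppr_eq0.
move: (od _ _ hne); rewrite Emat_at MmatE /Mn => /eqP.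
rewrite -[1]/(Posz 1%N) eqz_nat => /eqP c1.
have cP : #|[pred s | P s]| = 1%N.
  rewrite -c1 -sum1_card big_mkcond /=; apply: eq_bigr => s _.
  by rewrite inE /P; case: (_ && _).
have [s0 Hs0] := mem_card1 cP.
have P0 : P s0 by have := Hs0 s0; rewrite !inE eqxx.
have allP : forall s, x s != k s -> P s.
  move=> s ne; have := od _ _ ne; have := M_ge1 n x k s.
  rewrite /Emat; case: ifP => [/andP[h1 /eqP h2] _ _|]; last first.
    by move=> _ h1 h2; rewrite h2 in h1.
  rewrite /P dvdzB_sym h1 /=; apply/eqP; clear -h2; lia.
exists s0.
  by move: P0; rewrite /P dvdzB_sym => /andP[].
apply/ffunP => s; rewrite /upd ffunE; case: eqP => [->|/eqP ns].
  move: P0; rewrite /P => /andP[_ /eqP e].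
  have e2 : (h - x s0 = h + d - k s0 :> int) by [].
  set a := k s0 in e2 *; set b := x s0 in e2 *; clear -e2; lia.
apply/eqP; rewrite eq_sym; apply/negPn/negP => ne.
by have := Hs0 s; rewrite !inE (allP s ne) (negbTE ns).
Qed.

Lemma Pw_vzero n M : Pw n M vzero = 1.
Proof. by rewrite /Pw big1 // => i _; rewrite expr0. Qed.

Lemma hne_d (h d : int) : d != 0 -> h != h + d.
Proof. by move=> d0; rewrite -subr_eq0 opprD addrA subrr sub0r oppr_eq0. Qed.

Lemma opmul_E n r (h d : int) (A : mat) j (x y : idx r) : (0 < n)%N -> d != 0 ->
  opmul (Aop n r (Emat n h (h + d)) vzero) (Aop n r A j) x y =
  \sum_(s < r | (n%:Z %| x s - h)%Z) Aop n r A j (upd x s d) y.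
Proof.
move=> n0 d0; rewrite /opmul.
have Ed : forall k, Emat n h (h + d) k k = 0.
  by move=> k; apply: Emat_diag; apply: hne_d.
under eq_fsbigr do rewrite (Aop_Q _ _ _ n0 Ed) /Q Pw_vzero.
set r0 := [seq upd x s d | s <- enum 'I_r & (n%:Z %| x s - h)%Z].
rewrite (fsbigE r0).
- under eq_bigl do rewrite in_setT.
  rewrite /r0 big_map big_filter big_enum_cond /=.
  apply: eq_bigr => s Ps; rewrite asboolT ?mul1r //; exact: supp_E'.
- rewrite /r0 map_inj_uniq.
    apply: filter_uniq; by have := enum_uniq 'I_r; rewrite enumT.
  move=> s1 s2 e; exact: (upd_inj (x:=x) d0 e).
- by [].
move=> k _ kr; case: asboolP => // od; last by rewrite mul0r.
have [s Ps ek] := supp_E d0 od.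
move: kr; rewrite ek => /negP; case.
apply: (map_f (fun s0 => upd x s0 d)); rewrite mem_filter Ps /=.
by have := mem_enum 'I_r s; rewrite enumT.
Qed.


Lemma binom2 (X : rat) J :
  \sum_(0 <= i < J.+1) ('C(J, i))%:R * X ^+ (J - i) = (X + 1) ^+ J.
Proof.
rewrite exprDn big_mkord; apply: eq_bigr => i _.
by rewrite expr1n mulr1 mulr_natl.
Qed.

Lemma binom1 (X : rat) J :
  \sum_(0 <= i < J.+1) ((-1) ^+ i * ('C(J, i))%:R) * X ^+ (J + 1 - i) =
  X * (X - 1) ^+ J.
Proof.
rewrite exprDn big_mkord mulr_sumr; apply: eq_bigr => i _.
have iJ : (i <= J)%N by rewrite -ltnS.
rewrite addn1 subSn // exprS mulrnAr -mulr_natl; lra.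
Qed.

Lemma dvd_range n (a b : nat) : (0 < n)%N -> (1 <= a <= n)%N -> (1 <= b <= n)%N ->
  (n%:Z %| a%:Z - b%:Z)%Z = (a == b).
Proof.
move=> n0 ab bb; have [_ rd ru] := rep_spec b n0.
case: (boolP (a == b)) => [/eqP->|nab]; first by rewrite subrr dvdz0.
apply/negbTE/negP => h; move/negP: nab; apply; apply/eqP.
rewrite (ru _ ab h); apply/esym/ru => //; by rewrite subrr dvdz0.
Qed.

Definition mE n (M : mat) (h d c : int) : mat :=
  fun k l => M k l - Emat n h c k l + Emat n (h + d) c k l.

Lemma Mmat_upd n r (x y : idx r) s (h d : int) : (n%:Z %| x s - h)%Z ->
  Mmat n (upd x s d) y = mE n (Mmat n x y) h d (y s - x s + h).
Proof.
move=> hs; apply: mat_ext => k l; rewrite /mE !Mmat_E (bigD1 s) //= [in RHS](bigD1 s) //=.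
rewrite /upd ffunE eqxx.
rewrite (@Emat_shift n (x s + d) (y s) (h + d) (y s - x s + h)); last first.
- by clear; lia.
- by have -> : x s + d - (h + d) = x s - h by clear; lia.
rewrite (@Emat_shift n (x s) (y s) h (y s - x s + h)) //; last by clear; lia.
rewrite (eq_bigr (fun i => Emat n (x i) (y i) k l)); last first.
  by move=> i ni; rewrite ffunE (negbTE ni).
set a := Emat n h _ k l; set b := Emat n (h + d) _ k l.
by rewrite [a + _]addrC addrK addrC.
Qed.

Lemma odeq_equiv (M M' B B' : mat) :
  (forall k l, k != l -> (M k l = B k l <-> M' k l = B' k l)) ->
  `[< odeq M B >] = `[< odeq M' B' >].
Proof.
move=> e; apply: asbool_equiv_eq; split => od k l kl; apply/(e k l kl); exact: od.
Qed.

Lemma case_a n (M A : mat) (h d c : int) (j : nvec) : c != h -> c != h + d ->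
  Q n (mE n M h d c) A j = Q n M (msub (madd A (Emat n h c)) (Emat n (h + d) c)) j.
Proof.
move=> ch chd; rewrite /Q.
rewrite (@odeq_equiv _ M _ (msub (madd A (Emat n h c)) (Emat n (h + d) c))); last first.
  move=> k l kl; rewrite /mE /msub /madd; split => e; clear -e; lia.
case: asboolP => // _; rewrite /Pw; apply: eq_bigr => i _.
by rewrite /mE !Emat_diag ?subr0 ?addr0 // eq_sym.
Qed.

Lemma evec_other n (q i : nat) (c : int) : (0 < n)%N -> (1 <= q <= n)%N ->
  (1 <= i <= n)%N -> (n%:Z %| q%:Z - c)%Z -> i != q -> evec n c i%:Z = 0%N.
Proof.
move=> n0 qb ib qc iq; rewrite /evec.
have -> : (n%:Z %| i%:Z - c)%Z = (n%:Z %| i%:Z - q%:Z)%Z.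
  by rewrite dvdzB_sym [in RHS]dvdzB_sym (dvd_shift _ qc).
by rewrite dvd_range // (negbTE iq).
Qed.

Lemma evec_at n (q : nat) (c : int) : (n%:Z %| q%:Z - c)%Z -> evec n c q%:Z = 1%N.
Proof. by move=> h; rewrite /evec h. Qed.

Lemma case_h n (M A : mat) (hn : nat) (d : int) (j : nvec) : (0 < n)%N -> (1 <= hn <= n)%N -> d != 0 ->
  \sum_(0 <= i < (j hn%:Z).+1) ((-1) ^+ i * ('C(j hn%:Z, i))%:R) *
     Q n M (msub A (Emat n (hn%:Z + d) hn%:Z))
       (vsub (vadd j (evec n hn%:Z)) (vscale i (evec n hn%:Z)))
  = (M hn%:Z hn%:Z)%:~R * Q n (mE n M hn%:Z d hn%:Z) A j.
Proof.
move=> n0 hb d0; set h := hn%:Z.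
have hhd : h != h + d by apply: hne_d.
rewrite /Q (@odeq_equiv (mE n M h d h) M A (msub A (Emat n (h + d) h))); last first.
  move=> k l kl; rewrite /mE /msub Emat_offdiag // subr0.
  by split => e; clear -e; lia.
case: asboolP => _; last by rewrite mulr0 big1 // => i _; rewrite mulr0.
pose R : rat := \prod_(1 <= i < n.+1 | i != hn) (M i%:Z i%:Z)%:~R ^+ (j i%:Z).
set X : rat := (M h h)%:~R.
have ch : (n%:Z %| hn%:Z - h)%Z by rewrite subrr dvdz0.
have t1 : forall i, (0 <= i < (j h).+1)%N ->
    Pw n M (vsub (vadd j (evec n h)) (vscale i (evec n h))) = X ^+ (j h + 1 - i) * R.
  move=> i _; rewrite (@Pw_split n hn M M j) //.
    by rewrite /vsub /vadd /vscale evec_at // muln1.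
  move=> i' ib iq; split => //.
  by rewrite /vsub /vadd /vscale (evec_other n0 hb ib ch iq) muln0 addn0 subn0.
have t2 : Pw n (mE n M h d h) j = (X - 1) ^+ (j h) * R.
  rewrite (@Pw_split n hn M (mE n M h d h) j j) //.
    rewrite /mE Emat_at (@Emat_diag n (h + d) h) 1?eq_sym // addr0.
    by rewrite rmorphB.
  move=> i' ib iq; split => //; rewrite /mE (@Emat_diag n (h + d) h) 1?eq_sym //.
  rewrite addr0 /Emat.
  have -> : (n%:Z %| i'%:Z - h)%Z = false by rewrite dvd_range // (negbTE iq).
  by rewrite subr0.
rewrite (eq_big_nat _ _ (fun i ib => congr1 _ (t1 i ib))).
under eq_bigr do rewrite mulrA.
by rewrite -mulr_suml binom1 t2 mulrA.
Qed.

Lemma case_hd n (M A : mat) (h d c0 : int) (q : nat) (j : nvec) : (0 < n)%N -> (1 <= q <= n)%N -> d != 0 ->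
  (n%:Z %| q%:Z - (h + d))%Z -> (n%:Z %| q%:Z - c0)%Z -> j c0 = j q%:Z ->
  (A h (h + d) + 1)%:~R *
  \sum_(0 <= i < (j c0).+1) ('C(j c0, i))%:R *
     Q n M (madd A (Emat n h (h + d))) (vsub j (vscale i (evec n c0)))
  = (M h (h + d))%:~R * Q n (mE n M h d (h + d)) A j.
Proof.
move=> n0 qb d0 qc qc0 jq.
have hhd : h != h + d by apply: hne_d.
rewrite /Q (@odeq_equiv (mE n M h d (h + d)) M A (madd A (Emat n h (h + d)))); last first.
  move=> k l kl; rewrite /mE /madd Emat_offdiag // addr0.
  by split => e; clear -e; lia.
case: asboolP => od; last by rewrite mulr0 big1 ?mulr0 // => i _; rewrite mulr0.
have Mhd : M h (h + d) = A h (h + d) + 1.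
  by rewrite od // /madd Emat_at.
pose R : rat := \prod_(1 <= i < n.+1 | i != q) (M i%:Z i%:Z)%:~R ^+ (j i%:Z).
set X : rat := (M q%:Z q%:Z)%:~R.
have t1 : forall i, (0 <= i < (j c0).+1)%N ->
    Pw n M (vsub j (vscale i (evec n c0))) = X ^+ (j c0 - i) * R.
  move=> i _; rewrite (@Pw_split n q M M j) //.
    by rewrite /vsub /vscale evec_at // muln1 jq.
  move=> i' ib iq; split => //.
  by rewrite /vsub /vscale (evec_other n0 qb ib qc0 iq) muln0 subn0.
have t2 : Pw n (mE n M h d (h + d)) j = (X + 1) ^+ (j c0) * R.
  rewrite (@Pw_split n q M (mE n M h d (h + d)) j j) //.
    rewrite /mE (@Emat_diag n h (h + d)) // subr0 jq.
    by rewrite /Emat qc eqxx rmorphD.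
  move=> i' ib iq; split => //; rewrite /mE (@Emat_diag n h (h + d)) // subr0.
  rewrite /Emat.
  have -> : (n%:Z %| i'%:Z - (h + d))%Z = false.
    rewrite dvdzB_sym -(dvd_shift _ qc) dvdzB_sym dvd_range //.
    exact: negbTE.
  by rewrite addr0.
rewrite (eq_big_nat _ _ (fun i ib => congr1 _ (t1 i ib))).
under eq_bigr do rewrite mulrA.
by rewrite -mulr_suml binom2 t2 Mhd.
Qed.


Definition Ap n (A : mat) (h d c : int) : mat :=
  msub (madd A (Emat n h c)) (Emat n (h + d) c).

Lemma count_col n r (x y : idx r) (h c : int) :
  (Mmat n x y h c)%:~R =
  \sum_(s < r | (n%:Z %| x s - h)%Z) (if y s - x s + h == c then 1 else 0) :> rat.
Proof.
rewrite MmatE /Mn -[(Posz _)%:~R]/((_ : nat)%:R) natr_sum [RHS]big_mkcond /=.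
apply: eq_bigr => s _; rewrite dvdzB_sym.
have -> : (h - x s == c - y s) = (y s - x s + h == c).
  by apply/eqP/eqP => e; clear -e; lia.
by case: (_ %| _)%Z; case: (_ == _).
Qed.

Lemma lhs_split n r (x y : idx r) (h d : int) (A : mat) (j : nvec) : (0 < n)%N ->
  (forall k, A k k = 0) -> d != 0 ->
  \sum_(s < r | (n%:Z %| x s - h)%Z) Aop n r A j (upd x s d) y =
  \sum_(s < r | (n%:Z %| x s - h)%Z)
     (if (y s - x s + h != h) && (y s - x s + h != h + d)
      then Q n (Mmat n x y) (Ap n A h d (y s - x s + h)) j else 0)
  + (Mmat n x y h h)%:~R * Q n (mE n (Mmat n x y) h d h) A j
  + (Mmat n x y h (h + d))%:~R * Q n (mE n (Mmat n x y) h d (h + d)) A j.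
Proof.
move=> n0 A0 d0; have hhd := hne_d h d0.
rewrite !count_col !mulr_suml -!big_split /=.
apply: eq_bigr => s Ps; rewrite Aop_Q // (@Mmat_upd n r x y s h d Ps).
set c := y s - x s + h.
case: (eqVneq c h) => [->|ch].
  by rewrite ?eqxx (negbTE hhd) /= mul1r mul0r add0r addr0.
case: (eqVneq c (h + d)) => [->|chd].
  by rewrite ?eqxx /= !mul0r mul1r !add0r.
by rewrite /= !mul0r !addr0 case_a.
Qed.

Lemma part1 n r (x y : idx r) (h d dl : int) (S : set int) (F : int -> rat)
    (g : int -> rat) :
  (forall i, S i -> F i = (Mmat n x y h (i + dl))%:~R * g (i + dl)) ->
  (forall c, (c != h) && (c != h + d) -> ~ S (c - dl) -> g c = 0) ->
  (forall c, S (c - dl) -> (c != h) && (c != h + d)) ->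
  \sum_(i \in S) F i =
  \sum_(s < r | (n%:Z %| x s - h)%Z)
     (if (y s - x s + h != h) && (y s - x s + h != h + d)
      then g (y s - x s + h) else 0).
Proof.
move=> hF hg hS.
rewrite (eq_fsbigr (fun i => \sum_(s < r | (n%:Z %| x s - h)%Z)
   (if y s - x s + h == i + dl then g (i + dl) else 0))); last first.
  move=> i /set_mem Si; rewrite hF // count_col mulr_suml.
  by apply: eq_bigr => s _; case: ifP; rewrite ?mul1r ?mul0r.
set r0 := undup [seq y s - x s + h - dl | s <- enum 'I_r].
rewrite (fsbigE [seq i <- r0 | i \in S]).
- rewrite big_filter_cond exchange_big /=; apply: eq_bigr => s Ps.
  rewrite big_mkcond (bigD1_seq (y s - x s + h - dl)) /=; last exact: undup_uniq.
    rewrite andbb subrK eqxx big1 => [|i ni]; last first.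
      case: ifP => // _; case: ifP => // /eqP e.
      by move: ni; rewrite e addrK eqxx.
    rewrite addr0; case: (boolP (_ \in S)) => [/set_mem Si|nS].
      by rewrite (hS _ Si).
    case: ifP => // cn; rewrite (hg _ cn) // => Si.
    by move: nS; rewrite (mem_set Si).
  rewrite mem_undup; apply: (map_f (fun s0 => y s0 - x s0 + h - dl)).
  by have := mem_enum 'I_r s; rewrite enumT.
- by rewrite filter_uniq // undup_uniq.
- by move=> i /=; rewrite mem_filter => /andP[/set_mem].
move=> i Si; rewrite mem_filter (mem_set Si) /= => ni.
apply: big1 => s _; case: eqP => // e; move/negP: ni; case.
have -> : i = y s - x s + h - dl by rewrite e addrK.
rewrite /r0 mem_undup; apply: (map_f (fun s0 => y s0 - x s0 + h - dl)).
by have := mem_enum 'I_r s; rewrite enumT.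
Qed.


Lemma Mmat_ge0 n r (x y : idx r) k l : 0 <= Mmat n x y k l.
Proof. by rewrite MmatE. Qed.

Lemma g_zero n r (x y : idx r) (A : mat) (h d c : int) (j : nvec) : d != 0 ->
  c != h + d -> A (h + d) c < 1 -> Q n (Mmat n x y) (Ap n A h d c) j = 0.
Proof.
move=> d0 chd lt; rewrite /Q; case: asboolP => // od.
have := od (h + d) c; rewrite eq_sym => /(_ chd).
rewrite /Ap /msub /madd Emat_at.
have -> : Emat n h c (h + d) c = 0.
  rewrite /Emat subrr; have -> : (h + d - h == 0) = false.
    by rewrite addrAC subrr add0r; exact: negbTE.
  by rewrite andbF.
move=> e; have := Mmat_ge0 n x y (h + d) c; rewrite e addr0.
move=> h1; exfalso; clear -h1 lt; lia.
Qed.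

Lemma coef_eq n r (x y : idx r) (A : mat) (h d c : int) (j : nvec) : c != h -> d != 0 ->
  (A h c + 1)%:~R * Q n (Mmat n x y) (Ap n A h d c) j =
  (Mmat n x y h c)%:~R * Q n (Mmat n x y) (Ap n A h d c) j.
Proof.
move=> ch d0; rewrite /Q; case: asboolP => od; last by rewrite !mulr0.
rewrite od; last by rewrite eq_sym.
rewrite /Ap /msub /madd Emat_at.
have -> : Emat n (h + d) c h c = 0.
  rewrite /Emat subrr; have -> : (h - (h + d) == 0) = false.
    rewrite opprD addrA subrr sub0r oppr_eq0; exact: negbTE.
  by rewrite andbF.
by rewrite subr0.
Qed.

Lemma opmul_0 n r (t : int) (A : mat) (j : nvec) (x y : idx r) : (0 < n)%N ->
  opmul (Aop n r mzero (evec n t)) (Aop n r A j) x y =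
  Aop n r mzero (evec n t) x x * Aop n r A j x y.
Proof.
move=> n0; rewrite /opmul (fsbigE [:: x]) //.
  by rewrite big_cons big_nil in_setT /=; exact: addr0.
move=> k _; rewrite inE => kx.
rewrite (Aop_Q _ _ _ n0) // /Q; case: asboolP => [od|]; last by rewrite mul0r.
by move: kx; rewrite (odeq_zero od) eqxx.
Qed.

Lemma part_one n r (tn : nat) (A : mat) (j : nvec) (x y : idx r) : (0 < n)%N ->
  (1 <= tn <= n)%N -> (forall k, A k k = 0) ->
  opmul (Aop n r mzero (evec n tn%:Z)) (Aop n r A j) x y =
  opadd (Aop n r A (vadd j (evec n tn%:Z)))
     (opscale ((\sum_(s \in [set: int]) A tn%:Z s)%:~R) (Aop n r A j)) x y.
Proof.
move=> n0 tb A0; set t := tn%:Z.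
rewrite opmul_0 // /opadd /opscale !(Aop_Q _ _ _ n0) // /Q (asboolT (odeq_self n x)).
case: asboolP => od; last by rewrite !mulr0 addr0.
have key : A = offM (Mmat n x y).
  apply: mat_ext => k l; rewrite /offM; case: eqP => [<-|/eqP kl]; first exact: A0.
  by rewrite od.
have ct : (n%:Z %| tn%:Z - t)%Z by rewrite subrr dvdz0.
pose R : rat := \prod_(1 <= i < n.+1 | i != tn) ((Mmat n x y) i%:Z i%:Z)%:~R ^+ (j i%:Z).
have p1 : Pw n (Mmat n x x) (evec n t) = (Mmat n x x t t)%:~R.
  rewrite (@Pw_split n tn (Mmat n x x) (Mmat n x x) (evec n t)) //.
  rewrite evec_at // expr1 big_seq_cond big1 ?mulr1 // => i /andP[].
  rewrite mem_index_iota ltnS => ib iq.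
  by rewrite (evec_other n0 tb ib ct iq) expr0.
have p2 : Pw n (Mmat n x y) (vadd j (evec n t)) = (Mmat n x y t t)%:~R ^+ (j t + 1) * R.
  rewrite (@Pw_split n tn (Mmat n x y) (Mmat n x y) j) //.
    by rewrite /vadd evec_at.
  move=> i ib iq; split => //.
  by rewrite /vadd (evec_other n0 tb ib ct iq) addn0.
have p3 : Pw n (Mmat n x y) j = (Mmat n x y t t)%:~R ^+ (j t) * R.
  by rewrite (@Pw_split n tn (Mmat n x y) (Mmat n x y) j).
have e : Mmat n x x t t = Mmat n x y t t + \sum_(l \in [set: int]) A t l.
  rewrite key rowsum_off !MmatE !Mn_diag -!natz !natr_sum -big_split /=.
  apply: eq_bigr => s _; rewrite eqxx andbT.
  by case: (_ %| _)%Z; case: (x s == y s).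
rewrite p1 p2 p3 e rmorphD /= addn1 exprS; lra.
Qed.


Lemma part_two n r (hn : nat) (d : int) (A : mat) (j : nvec) (x y : idx r)
  (S : set int) (F : int -> rat) (dl c0 : int) (F2 F3 : rat) :
  (1 < n)%N -> (1 <= hn <= n)%N -> d != 0 -> periodic_vec n j ->
  (forall k, A k k = 0) ->
  (forall i, S i -> F i = (Mmat n x y hn%:Z (i + dl))%:~R *
       Q n (Mmat n x y) (Ap n A hn%:Z d (i + dl)) j) ->
  (forall c, (c != hn%:Z) && (c != hn%:Z + d) -> ~ S (c - dl) -> A (hn%:Z + d) c < 1) ->
  (forall c, S (c - dl) -> (c != hn%:Z) && (c != hn%:Z + d)) ->
  F2 = \sum_(0 <= i < (j hn%:Z).+1) ((-1) ^+ i * ('C(j hn%:Z, i))%:R) *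
     Aop n r (msub A (Emat n (hn%:Z + d) hn%:Z))
       (vsub (vadd j (evec n hn%:Z)) (vscale i (evec n hn%:Z))) x y ->
  (n%:Z %| c0 - (hn%:Z + d))%Z ->
  F3 = (A hn%:Z (hn%:Z + d) + 1)%:~R *
     \sum_(0 <= i < (j c0).+1) ('C(j c0, i))%:R *
     Aop n r (madd A (Emat n hn%:Z (hn%:Z + d))) (vsub j (vscale i (evec n c0))) x y ->
  opmul (Aop n r (Emat n hn%:Z (hn%:Z + d)) vzero) (Aop n r A j) x y =
  \sum_(i \in S) F i + (F2 + F3).
Proof.
move=> n1 hb d0 Hj A0 hF hnS hS e2 cc0 e3.
have n0 : (0 < n)%N by apply: ltnW.
set h := hn%:Z.
have hhd := hne_d h d0.
rewrite opmul_E // lhs_split // -addrA; congr (_ + _).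
  rewrite (@part1 n r x y h d dl S F (fun c => Q n (Mmat n x y) (Ap n A h d c) j)).
  - by [].
  - by move=> i Si; rewrite hF.
  - move=> c cn nS; apply: g_zero => //.
      by case/andP: cn.
    exact: hnS.
  - by move=> c; apply: hS.
congr (_ + _).
  have B0 : forall k, msub A (Emat n (h + d) h) k k = 0.
    by move=> k; rewrite /msub A0 Emat_diag ?subr0 // eq_sym.
  rewrite e2; under eq_bigr do rewrite (Aop_Q _ _ _ n0 B0).
  by rewrite case_h.
have [qb qd _] := rep_spec (hn%:Z + d) n0.
have B0 : forall k, madd A (Emat n h (h + d)) k k = 0.
  by move=> k; rewrite /madd A0 Emat_diag ?add0r.
rewrite e3; under eq_bigr do rewrite (Aop_Q _ _ _ n0 B0).
rewrite (@case_hd n _ A h d c0 (rep n (h + d))) //.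
  by rewrite dvdzB_sym (dvd_shift _ cc0) dvdzB_sym.
apply: per_vec_dvd => //.
by rewrite (dvd_shift _ cc0) dvdzB_sym.
Qed.

Unset Implicit Arguments.
Set Strict Implicit.
Theorem theorem6p2p2 (n : nat) (hn : (2 <= n)%N) (h t : int)
    (Hh : 1 <= h <= n%:Z) (Ht : 1 <= t <= n%:Z)
    (j : nvec) (Hj : periodic_vec n j) (A : mat) (HA : in_Theta_pm n A)
    (r : nat) :
  (* (1) *)
  opmul (Aop n r mzero (evec n t)) (Aop n r A j)
  = opadd (Aop n r A (vadd j (evec n t)))
          (opscale ((\sum_(s \in [set: int]) A t s)%:~R) (Aop n r A j))
  /\
  (* (2) *)
  (forall eps : int, eps = 1 \/ eps = -1 ->
    opmul (Aop n r (Emat n h (h + eps)) vzero) (Aop n r A j)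
    = opadd
        (opsumZ [set i : int | [/\ i != h, i != h + eps & 1 <= A (h + eps) i]]
           (fun i => opscale ((A h i + 1)%:~R)
                       (Aop n r (msub (madd A (Emat n h i)) (Emat n (h + eps) i)) j)))
      (opadd
        (opsumN (j h) (fun i => opscale ((-1) ^+ i * ('C(j h, i))%:R)
              (Aop n r (msub A (Emat n (h + eps) h))
                       (vsub (vadd j (evec n h)) (vscale i (evec n h))))))
        (opscale ((A h (h + eps) + 1)%:~R)
           (opsumN (j (h + eps)) (fun i => opscale ('C(j (h + eps), i))%:R
              (Aop n r (madd A (Emat n h (h + eps)))
                       (vsub j (vscale i (evec n (h + eps))))))))))
  /\
  (* (3) *)
  (forall m : int, m != 0 ->
    opmul (Aop n r (Emat n h (h + m * n%:Z)) vzero) (Aop n r A j)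
    = opadd
        (opsumZ [set s : int | [/\ s != h, s != h - m * n%:Z & 1 <= A h s]]
           (fun s => opscale ((A h (s + m * n%:Z) + 1)%:~R)
              (Aop n r (msub (madd A (Emat n h (s + m * n%:Z))) (Emat n h s)) j)))
      (opadd
        (opsumN (j h) (fun t0 => opscale ((A h (h + m * n%:Z) + 1)%:~R * ('C(j h, t0))%:R)
              (Aop n r (madd A (Emat n h (h + m * n%:Z)))
                       (vsub j (vscale t0 (evec n h))))))
        (opsumN (j h) (fun t0 => opscale ((-1) ^+ t0 * ('C(j h, t0))%:R)
              (Aop n r (msub A (Emat n h (h - m * n%:Z)))
                       (vsub (vadd j (evec n h)) (vscale t0 (evec n h)))))))).
Proof.
have n0 : (0 < n)%N by apply: ltnW.
case: HA => HAp HAr HAn HA0.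
have [hk eh] : exists hk : nat, h = hk%:Z.
  by case: h Hh => [k|k] //; exists k.
have [tk et] : exists tk : nat, t = tk%:Z.
  by case: t Ht => [k|k] //; exists k.
subst h t.
have hb : (1 <= hk <= n)%N by rewrite -!lez_nat.
have tb : (1 <= tk <= n)%N by rewrite -!lez_nat.
split; [|split].
- apply/funext => x; apply/funext => y; exact: part_one.
- move=> eps heps.
  have d0 : eps != 0 by case: heps => ->.
  apply/funext => x; apply/funext => y.
  rewrite /opadd /opscale /opsumN /opsumZ.
  apply: (@part_two n r hk eps A j x y _ _ 0 (hk%:Z + eps)) => //.
  + move=> i [ih ihe _]; rewrite addr0 (Aop_Q _ _ _ n0); last first.
      by move=> k; rewrite /msub /madd HA0 !Emat_diag ?subr0 ?add0r // eq_sym.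
    exact: coef_eq.
  + move=> c /andP[ch chd]; rewrite subr0 => nS; rewrite ltNge; apply/negP => h1.
    by apply: nS; split.
  + by move=> c; rewrite subr0 => -[? ? _]; apply/andP.
  + by rewrite subrr dvdz0.
- move=> m m0.
  set d := m * n%:Z.
  have d0 : d != 0 by rewrite mulf_neq0 // eqz_nat -lt0n.
  apply/funext => x; apply/funext => y.
  rewrite /opadd /opscale /opsumN /opsumZ.
  rewrite (@Emat_shift n hk%:Z (hk%:Z - d) (hk%:Z + d) hk%:Z); first last.
  - by clear; lia.
  - by rewrite opprD addrA subrr sub0r rpredN dvdz_mull.
  rewrite [X in _ = _ + X]addrC.
  under [X in _ = _ + (_ + X)]eq_bigr do rewrite -mulrA.
  rewrite -mulr_sumr.
  apply: (@part_two n r hk d A j x y _ _ d hk%:Z) => //.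
  + move=> s [sh shd _].
    rewrite (@Emat_shift n hk%:Z s (hk%:Z + d) (s + d)); first last.
    - by clear; lia.
    - by rewrite opprD addrA subrr sub0r rpredN dvdz_mull.
    rewrite (Aop_Q _ _ _ n0); last first.
      move=> k; rewrite /msub /madd HA0 !Emat_diag ?subr0 ?add0r //.
        by apply/eqP => e; move/eqP: sh; apply; clear -e; lia.
      by apply/eqP => e; move/eqP: shd; apply; clear -e; lia.
    apply: coef_eq => //.
    by apply/eqP => e; move/eqP: shd; apply; clear -e; lia.
  + move=> c /andP[ch chd] nS; rewrite ltNge; apply/negP => h1.
    apply: nS; split.
    - by apply/eqP => e; move/eqP: chd; apply; clear -e; lia.
    - by apply/eqP => e; move/eqP: ch; apply; clear -e; lia.
    - by rewrite -(per_mat HAp hk%:Z (c - d) m) subrK.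
  + move=> c [ch chd _]; apply/andP; split.
    - by apply/eqP => e; move/eqP: chd; apply; clear -ch e; lia.
    - by apply/eqP => e; move/eqP: ch; apply; clear -chd e; lia.
  + by rewrite opprD addrA subrr sub0r rpredN dvdz_mull.
Qed.
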